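(* Consider a $d$-regular simple graph ($d\ge3$) on $B$ bonds, with arbitrary bond lengths, quantised with unitary vertex scattering matrices that prohibit back-scattering (all diagonal entries of every $\sigma_v$ are zero). Let $T$ be a positive integer, $\kappa>0$, and $f\in\mathbb{C}^{2B}$ with $|f_b|\le\kappa$ for $b=1,\dots,2B$. Then for all $t=1,2,\dots,T$, $$\big|\langle f,\tilde M^{(t)}f\rangle_{\mathbb{C}^{2B}}-\langle f,M^tf\rangle_{\mathbb{C}^{2B}}\big|\le\frac{2\kappa^2}{(d-2)(d-1)}(d-1)^t\,|\mathcal{C}_{B,2T}|.$$
   Context: A graph is simple if it has no loops or multiple edges. Each bond of length $L_b>0$ gives two directed bonds of equal length; $o(b),t(b)$ denote origin and terminus of directed bond $b$. Each vertex $v$ carries a unitary $d\times d$ matrix $\sigma_v$ indexed by the bonds at $v$; the bond scattering matrix $S$ ($2B\times2B$) has $S_{bc}=0$ unless $t(b)=o(c)$, and otherwise equals the entry of $\sigma_{t(b)}$ in the row of the bond underlying $c$ and column of the bond underlying $b$. $U(k)_{bc}=e^{ikL_b}S_{bc}$. $M$ is the $2B\times2B$ matrix $M_{bc}=|S_{bc}|^2$. $\tilde M^{(t)}_{bc}=\lim_{K\to\infty}\frac1K\int_0^K|(U(k)^t)_{bc}|^2\,dk$. $\langle x,y\rangle=\sum_i\bar x_iy_i$. A cycle is a closed path without back-tracking; $\mathcal{C}_{B,t}$ is the set of bonds lying on a cycle of length at most $t$. *)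

(* Defs.v *)
From Stdlib Require Import Reals Lra List.
Import ListNotations.
Open Scope R_scope.

Definition Cpx := (R * R)%type.
Definition C0 : Cpx := (0, 0).
Definition C1 : Cpx := (1, 0).
Definition RtoC (x : R) : Cpx := (x, 0).
Definition Cadd (z w : Cpx) : Cpx := (fst z + fst w, snd z + snd w).
Definition Csub (z w : Cpx) : Cpx := (fst z - fst w, snd z - snd w).
Definition Cmul (z w : Cpx) : Cpx :=
  (fst z * fst w - snd z * snd w, fst z * snd w + snd z * fst w).
Definition Cconj (z : Cpx) : Cpx := (fst z, - snd z).
Definition Cabs2 (z : Cpx) : R := fst z ^ 2 + snd z ^ 2.
Definition Cabs (z : Cpx) : R := sqrt (Cabs2 z).
Definition Cexpi (x : R) : Cpx := (cos x, sin x).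

Definition Csum (n : nat) (F : nat -> Cpx) : Cpx :=
  fold_right (fun i acc => Cadd (F i) acc) C0 (seq 0 n).

Definition Cmatmul (n : nat) (A B : nat -> nat -> Cpx) : nat -> nat -> Cpx :=
  fun i j => Csum n (fun k => Cmul (A i k) (B k j)).
Fixpoint Cmatpow (n : nat) (A : nat -> nat -> Cpx) (t : nat) : nat -> nat -> Cpx :=
  match t with
  | O => fun i j => if Nat.eqb i j then C1 else C0
  | S t' => Cmatmul n (Cmatpow n A t') A
  end.
Definition Cmatvec (n : nat) (A : nat -> nat -> Cpx) (f : nat -> Cpx) : nat -> Cpx :=
  fun i => Csum n (fun j => Cmul (A i j) (f j)).
Definition Cinner (n : nat) (x y : nat -> Cpx) : Cpx :=
  Csum n (fun i => Cmul (Cconj (x i)) (y i)).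

(* Directed bonds are 0..2B-1: directed bond 2j runs from
   fst (ends j) to snd (ends j), directed bond 2j+1 runs backwards. *)
Definition und (b : nat) : nat := Nat.div b 2.
Definition dorig (ends : nat -> nat * nat) (b : nat) : nat :=
  if Nat.even b then fst (ends (und b)) else snd (ends (und b)).
Definition dterm (ends : nat -> nat * nat) (b : nat) : nat :=
  if Nat.even b then snd (ends (und b)) else fst (ends (und b)).
Definition drev (b : nat) : nat := if Nat.even b then S b else Nat.pred b.

Definition incb (ends : nat -> nat * nat) (v j : nat) : bool :=
  orb (Nat.eqb (fst (ends j)) v) (Nat.eqb (snd (ends j)) v).

Definition simple_graph (V B : nat) (ends : nat -> nat * nat) : Prop :=
  (forall j, (j < B)%nat ->
     (fst (ends j) < V)%nat /\ (snd (ends j) < V)%nat /\ fst (ends j) <> snd (ends j)) /\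
  (forall j j', (j < B)%nat -> (j' < B)%nat -> j <> j' ->
     ends j <> ends j' /\ ends j <> (snd (ends j'), fst (ends j'))).

Definition degree (B : nat) (ends : nat -> nat * nat) (v : nat) : nat :=
  length (filter (incb ends v) (seq 0 B)).

Definition regular (V B : nat) (ends : nat -> nat * nat) (d : nat) : Prop :=
  forall v, (v < V)%nat -> degree B ends v = d.

(* ---------- Vertex scattering matrices ----------
   sigma v j j' is the entry of sigma_v in the row of bond j and the column
   of bond j' (only bonds j, j' incident to v are meaningful). *)
Definition vertex_unitary (V B : nat) (ends : nat -> nat * nat)
  (sigma : nat -> nat -> nat -> Cpx) : Prop :=
  forall v j j', (v < V)%nat -> (j < B)%nat -> (j' < B)%nat ->
    incb ends v j = true -> incb ends v j' = true ->
    Csum B (fun k => if incb ends v k then Cmul (Cconj (sigma v k j)) (sigma v k j') else C0)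
      = (if Nat.eqb j j' then C1 else C0) /\
    Csum B (fun k => if incb ends v k then Cmul (sigma v j k) (Cconj (sigma v j' k)) else C0)
      = (if Nat.eqb j j' then C1 else C0).

Definition no_backscatter (V B : nat) (ends : nat -> nat * nat)
  (sigma : nat -> nat -> nat -> Cpx) : Prop :=
  forall v j, (v < V)%nat -> (j < B)%nat -> incb ends v j = true -> sigma v j j = C0.

Definition Smat (ends : nat -> nat * nat) (sigma : nat -> nat -> nat -> Cpx)
  : nat -> nat -> Cpx :=
  fun b c => if Nat.eqb (dterm ends b) (dorig ends c)
             then sigma (dterm ends b) (und c) (und b) else C0.

Definition Umat (L : nat -> R) (ends : nat -> nat * nat)
  (sigma : nat -> nat -> nat -> Cpx) (k : R) : nat -> nat -> Cpx :=
  fun b c => Cmul (Cexpi (k * L (und b))) (Smat ends sigma b c).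

Definition Mmat (ends : nat -> nat * nat) (sigma : nat -> nat -> nat -> Cpx)
  : nat -> nat -> Cpx :=
  fun b c => RtoC (Cabs2 (Smat ends sigma b c)).

Definition is_time_average (g : R -> R) (m : R) : Prop :=
  forall eps, 0 < eps -> exists K0, forall K, K0 < K -> 0 < K ->
    exists pr : Riemann_integrable g 0 K, Rabs (RiemannInt pr / K - m) < eps.

Definition is_Mtilde (B : nat) (L : nat -> R) (ends : nat -> nat * nat)
  (sigma : nat -> nat -> nat -> Cpx) (t : nat) (Mt : nat -> nat -> R) : Prop :=
  forall b c, (b < 2 * B)%nat -> (c < 2 * B)%nat ->
    is_time_average
      (fun k => Cabs2 (Cmatpow (2 * B) (Umat L ends sigma k) t b c)) (Mt b c).

Definition is_cycle (B : nat) (ends : nat -> nat * nat) (p : list nat) : Prop :=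
  p <> [] /\ (forall b, In b p -> (b < 2 * B)%nat) /\
  (forall i, (i < length p)%nat ->
     dterm ends (nth i p 0%nat) = dorig ends (nth (Nat.modulo (S i) (length p)) p 0%nat) /\
     nth (Nat.modulo (S i) (length p)) p 0%nat <> drev (nth i p 0%nat)).

Definition on_short_cycle (B : nat) (ends : nat -> nat * nat) (n j : nat) : Prop :=
  exists p, is_cycle B ends p /\ (length p <= n)%nat /\ exists b, In b p /\ und b = j.

Definition card_bonds (B : nat) (P : nat -> Prop) (n : nat) : Prop :=
  exists l : list nat, NoDup l /\ (forall j, In j l <-> ((j < B)%nat /\ P j)) /\ length l = n.

(* Main.v *)
Require Import Defs.
From Stdlib Require Import Reals List Lra Lia Arith Classical.
Require Import Defs.
Import ListNotations.
Open Scope R_scope.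

Open Scope R_scope.

Fixpoint Rsum (n : nat) (F : nat -> R) : R :=
  match n with O => 0 | S n' => Rsum n' F + F n' end.

Lemma Cpx_eq (z w : Cpx) : fst z = fst w -> snd z = snd w -> z = w.
Proof. destruct z, w; simpl; intros -> ->; reflexivity. Qed.

Lemma Csum_0 F : Csum 0 F = C0.
Proof. reflexivity. Qed.

Lemma Csum_S n F : Csum (S n) F = Cadd (Csum n F) (F n).
Proof.
  unfold Csum. rewrite seq_S, fold_right_app. simpl.
  generalize (seq 0 n). intro l.
  assert (H: forall a, fold_right (fun i acc => Cadd (F i) acc) a l =
    Cadd (fold_right (fun i acc => Cadd (F i) acc) C0 l) a).
  { induction l as [|x l IH]; intro a; simpl.
    - apply Cpx_eq; unfold Cadd, C0; simpl; ring.
    - rewrite IH. apply Cpx_eq; unfold Cadd; simpl; ring. }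
  rewrite H. f_equal. apply Cpx_eq; unfold Cadd, C0; simpl; ring.
Qed.

Lemma Csum_fst n F : fst (Csum n F) = Rsum n (fun i => fst (F i)).
Proof. induction n; [reflexivity|]. rewrite Csum_S. simpl. rewrite IHn. reflexivity. Qed.
Lemma Csum_snd n F : snd (Csum n F) = Rsum n (fun i => snd (F i)).
Proof. induction n; [reflexivity|]. rewrite Csum_S. simpl. rewrite IHn. reflexivity. Qed.

Lemma Csum_ext n F G : (forall i, (i < n)%nat -> F i = G i) -> Csum n F = Csum n G.
Proof.
  induction n; intro H; [reflexivity|]. rewrite !Csum_S. rewrite IHn by (intros; apply H; lia).
  rewrite H by lia. reflexivity.
Qed.

Lemma Rsum_ext n F G : (forall i, (i < n)%nat -> F i = G i) -> Rsum n F = Rsum n G.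
Proof.
  induction n; intro H; [reflexivity|]. simpl. rewrite IHn by (intros; apply H; lia).
  rewrite H by lia. reflexivity.
Qed.

Lemma Rsum_le n F G : (forall i, (i < n)%nat -> F i <= G i) -> Rsum n F <= Rsum n G.
Proof.
  induction n; intro H; simpl; [lra|].
  assert (Rsum n F <= Rsum n G) by (apply IHn; intros; apply H; lia).
  assert (F n <= G n) by (apply H; lia). lra.
Qed.

Lemma Rsum_nonneg n F : (forall i, (i < n)%nat -> 0 <= F i) -> 0 <= Rsum n F.
Proof.
  intro H. replace 0 with (Rsum n (fun _ => 0)).
  - apply Rsum_le. exact H.
  - induction n; simpl; [reflexivity|]. rewrite IHn by (intros; apply H; lia). ring.
Qed.

Lemma Rsum_plus n F G : Rsum n (fun i => F i + G i) = Rsum n F + Rsum n G.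
Proof. induction n; simpl; [ring|]. rewrite IHn. ring. Qed.

Lemma Rsum_minus n F G : Rsum n (fun i => F i - G i) = Rsum n F - Rsum n G.
Proof. induction n; simpl; [ring|]. rewrite IHn. ring. Qed.

Lemma Rsum_mult_l n a F : Rsum n (fun i => a * F i) = a * Rsum n F.
Proof. induction n; simpl; [ring|]. rewrite IHn. ring. Qed.

Lemma Rsum_mult_r n a F : Rsum n (fun i => F i * a) = Rsum n F * a.
Proof. induction n; simpl; [ring|]. rewrite IHn. ring. Qed.

Lemma Rsum_const0 n : Rsum n (fun _ => 0) = 0.
Proof. induction n; simpl; [ring|]. rewrite IHn. ring. Qed.

Lemma Rsum_swap n m (F : nat -> nat -> R) :
  Rsum n (fun i => Rsum m (fun j => F i j)) = Rsum m (fun j => Rsum n (fun i => F i j)).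
Proof.
  induction n; simpl.
  - rewrite Rsum_const0. reflexivity.
  - rewrite IHn. rewrite <- Rsum_plus. reflexivity.
Qed.

Lemma Rsum_single n F j : (j < n)%nat -> (forall i, (i < n)%nat -> i <> j -> F i = 0) ->
  Rsum n F = F j.
Proof.
  induction n; intros Hj H; [lia|]. simpl.
  destruct (Nat.eq_dec j n) as [->|Hne].
  - rewrite (Rsum_ext n F (fun _ => 0)). rewrite Rsum_const0. ring.
    intros; apply H; lia.
  - rewrite IHn by (try lia; intros; apply H; lia). rewrite (H n) by lia. ring.
Qed.

Lemma Rsum_ge_term n F j : (j < n)%nat -> (forall i, (i < n)%nat -> 0 <= F i) -> F j <= Rsum n F.
Proof.
  induction n; intros Hj H; [lia|]. simpl.
  destruct (Nat.eq_dec j n) as [->|Hne].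
  - assert (0 <= Rsum n F) by (apply Rsum_nonneg; intros; apply H; lia). lra.
  - assert (F j <= Rsum n F) by (apply IHn; [lia| intros; apply H; lia]).
    assert (0 <= F n) by (apply H; lia). lra.
Qed.

Lemma Csum_single n F j : (j < n)%nat -> (forall i, (i < n)%nat -> i <> j -> F i = C0) ->
  Csum n F = F j.
Proof.
  intros Hj H. apply Cpx_eq.
  - rewrite Csum_fst. rewrite (Rsum_single n _ j Hj). reflexivity.
    intros i Hi Hne. rewrite H by auto. reflexivity.
  - rewrite Csum_snd. rewrite (Rsum_single n _ j Hj). reflexivity.
    intros i Hi Hne. rewrite H by auto. reflexivity.
Qed.

Lemma Csum_zero n F : (forall i, (i < n)%nat -> F i = C0) -> Csum n F = C0.
Proof.
  intro H. apply Cpx_eq.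
  - rewrite Csum_fst. rewrite (Rsum_ext _ _ (fun _ => 0)) by (intros; rewrite H; auto). apply Rsum_const0.
  - rewrite Csum_snd. rewrite (Rsum_ext _ _ (fun _ => 0)) by (intros; rewrite H; auto). apply Rsum_const0.
Qed.

Lemma Cabs2_nonneg z : 0 <= Cabs2 z.
Proof. unfold Cabs2. nra. Qed.

Lemma Cabs_nonneg z : 0 <= Cabs z.
Proof. apply sqrt_pos. Qed.

Lemma Cabs2_mul z w : Cabs2 (Cmul z w) = Cabs2 z * Cabs2 w.
Proof. destruct z, w; unfold Cabs2, Cmul; simpl; ring. Qed.

Lemma Cabs_mul z w : Cabs (Cmul z w) = Cabs z * Cabs w.
Proof. unfold Cabs. rewrite Cabs2_mul. apply sqrt_mult; apply Cabs2_nonneg. Qed.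

Lemma Cabs_conj z : Cabs (Cconj z) = Cabs z.
Proof. destruct z; unfold Cabs, Cabs2, Cconj; simpl. f_equal. ring. Qed.

Lemma Cabs_RtoC x : Cabs (RtoC x) = Rabs x.
Proof. unfold Cabs, Cabs2, RtoC; simpl. rewrite <- sqrt_Rsqr_abs. unfold Rsqr. f_equal. ring. Qed.

Lemma Cabs_sq z : Cabs z * Cabs z = Cabs2 z.
Proof. unfold Cabs. apply sqrt_sqrt. apply Cabs2_nonneg. Qed.

Lemma Cabs_triangle z w : Cabs (Cadd z w) <= Cabs z + Cabs w.
Proof.
  destruct z as [a b], w as [c e].
  assert (H1 := Cabs_nonneg (a,b)). assert (H2 := Cabs_nonneg (c,e)).
  assert (H3 := Cabs_nonneg (Cadd (a,b) (c,e))).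
  assert (S1 := Cabs_sq (a,b)). assert (S2 := Cabs_sq (c,e)). assert (S3 := Cabs_sq (Cadd (a,b) (c,e))).
  unfold Cabs2, Cadd in *; simpl in *.
  set (x := Cabs (a,b)) in *. set (y := Cabs (c,e)) in *. set (s := Cabs (a+c, b+e)) in *.
  assert (a*c + b*e <= x*y).
  { assert ((a*c+b*e)^2 <= (x*y)^2).
    { replace ((x*y)^2) with ((x*x)*(y*y)) by ring. rewrite S1, S2.
      assert (0 <= (a*e-b*c)^2) by (apply pow2_ge_0).
      replace ((a ^ 2 + b ^ 2) * (c ^ 2 + e ^ 2)) with ((a*c+b*e)^2 + (a*e-b*c)^2) by ring. lra. }
    assert (0 <= x*y) by nra.
    destruct (Rle_dec (a*c+b*e) (x*y)) as [Hl|Hl]; [exact Hl|]. nra. }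
  assert (s*s <= (x+y)*(x+y)).
  { rewrite S3. replace ((x+y)*(x+y)) with (x*x + y*y + 2*(x*y)) by ring. rewrite S1, S2. nra. }
  destruct (Rle_dec s (x+y)) as [Hl|Hl]; [exact Hl|]. nra.
Qed.

Lemma Cabs_Csum n F : Cabs (Csum n F) <= Rsum n (fun i => Cabs (F i)).
Proof.
  induction n; simpl.
  - unfold Cabs, Cabs2, C0; simpl. replace (0*(0*1)+0*(0*1)) with 0 by ring. rewrite sqrt_0. lra.
  - rewrite Csum_S. eapply Rle_trans; [apply Cabs_triangle|]. lra.
Qed.

Open Scope R_scope.

Lemma und_e j : und (2*j) = j.
Proof. unfold und. rewrite <- Nat.div2_div. apply Nat.div2_double. Qed.
Lemma und_o j : und (2*j+1) = j.
Proof. unfold und. rewrite <- Nat.div2_div. apply Nat.div2_odd'. Qed.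
Lemma even_e j : Nat.even (2*j) = true.
Proof. apply Nat.even_even. Qed.
Lemma even_o j : Nat.even (2*j+1) = false.
Proof. rewrite Nat.add_1_r, Nat.even_succ, <- Nat.negb_even, Nat.even_even. reflexivity. Qed.

Lemma bcase b : (exists j, b = 2*j)%nat \/ (exists j, b = 2*j+1)%nat.
Proof.
  destruct (Nat.Even_or_Odd b) as [[j Hj]|[j Hj]]; [left|right]; exists j; lia.
Qed.

Section G.
Variable ends : nat -> nat * nat.

Lemma do_e j : dorig ends (2*j) = fst (ends j).
Proof. unfold dorig. rewrite even_e, und_e. reflexivity. Qed.
Lemma dt_e j : dterm ends (2*j) = snd (ends j).
Proof. unfold dterm. rewrite even_e, und_e. reflexivity. Qed.
Lemma do_o j : dorig ends (2*j+1) = snd (ends j).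
Proof. unfold dorig. rewrite even_o, und_o. reflexivity. Qed.
Lemma dt_o j : dterm ends (2*j+1) = fst (ends j).
Proof. unfold dterm. rewrite even_o, und_o. reflexivity. Qed.
Lemma dr_e j : drev (2*j) = (2*j+1)%nat.
Proof. unfold drev. rewrite even_e. lia. Qed.
Lemma dr_o j : drev (2*j+1) = (2*j)%nat.
Proof. unfold drev. rewrite even_o. lia. Qed.

Lemma drev_drev b : drev (drev b) = b.
Proof. destruct (bcase b) as [[j ->]|[j ->]]; [rewrite dr_e, dr_o|rewrite dr_o, dr_e]; auto. Qed.
Lemma und_drev b : und (drev b) = und b.
Proof. destruct (bcase b) as [[j ->]|[j ->]]; [rewrite dr_e, und_o, und_e|rewrite dr_o, und_o, und_e]; auto. Qed.
Lemma do_drev b : dorig ends (drev b) = dterm ends b.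
Proof. destruct (bcase b) as [[j ->]|[j ->]]; [rewrite dr_e, do_o, dt_e|rewrite dr_o, do_e, dt_o]; auto. Qed.
Lemma dt_drev b : dterm ends (drev b) = dorig ends b.
Proof. destruct (bcase b) as [[j ->]|[j ->]]; [rewrite dr_e, dt_o, do_e|rewrite dr_o, dt_e, do_o]; auto. Qed.
Lemma drev_lt B b : (b < 2*B)%nat -> (drev b < 2*B)%nat.
Proof. destruct (bcase b) as [[j ->]|[j ->]]; [rewrite dr_e|rewrite dr_o]; lia. Qed.
Lemma und_lt B b : (b < 2*B)%nat -> (und b < B)%nat.
Proof. destruct (bcase b) as [[j ->]|[j ->]]; [rewrite und_e|rewrite und_o]; lia. Qed.

Variables V B : nat.
Hypothesis SG : simple_graph V B ends.

Lemma do_lt b : (b < 2*B)%nat -> (dorig ends b < V)%nat.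
Proof.
  intro Hb. destruct SG as [S1 _].
  destruct (bcase b) as [[j ->]|[j ->]]; [rewrite do_e|rewrite do_o]; apply S1; lia.
Qed.
Lemma dt_lt b : (b < 2*B)%nat -> (dterm ends b < V)%nat.
Proof.
  intro Hb. destruct SG as [S1 _].
  destruct (bcase b) as [[j ->]|[j ->]]; [rewrite dt_e|rewrite dt_o]; apply S1; lia.
Qed.
Lemma do_ne_dt b : (b < 2*B)%nat -> dorig ends b <> dterm ends b.
Proof.
  intro Hb. destruct SG as [S1 _].
  destruct (bcase b) as [[j ->]|[j ->]];
  [rewrite do_e, dt_e|rewrite do_o, dt_o; apply not_eq_sym]; apply S1; lia.
Qed.
Lemma incb_do b : incb ends (dorig ends b) (und b) = true.
Proof.
  unfold incb. destruct (bcase b) as [[j ->]|[j ->]];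
  [rewrite do_e, und_e|rewrite do_o, und_o]; rewrite !Nat.eqb_refl; auto using Bool.orb_true_r.
Qed.
Lemma incb_dt b : incb ends (dterm ends b) (und b) = true.
Proof.
  unfold incb. destruct (bcase b) as [[j ->]|[j ->]];
  [rewrite dt_e, und_e|rewrite dt_o, und_o]; rewrite !Nat.eqb_refl; auto using Bool.orb_true_r.
Qed.

Lemma pair_of b : (dorig ends b, dterm ends b) =
  if Nat.even b then ends (und b) else (snd (ends (und b)), fst (ends (und b))).
Proof. unfold dorig, dterm. destruct (Nat.even b); [destruct (ends (und b))|]; auto. Qed.

Lemma same_ends b b' : (b < 2*B)%nat -> (b' < 2*B)%nat ->
  dorig ends b = dorig ends b' -> dterm ends b = dterm ends b' -> b = b'.
Proof.
  intros Hb Hb' Ho Ht.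
  assert (Hp : (dorig ends b, dterm ends b) = (dorig ends b', dterm ends b')) by congruence.
  destruct (Nat.eq_dec (und b) (und b')) as [Hu|Hu].
  - destruct (bcase b) as [[j ->]|[j ->]]; destruct (bcase b') as [[j' ->]|[j' ->]];
    rewrite ?und_e, ?und_o in Hu; subst j'; try reflexivity;
    exfalso; rewrite ?do_e, ?do_o, ?dt_e, ?dt_o in Ho; destruct SG as [S1 _];
    apply (S1 j); try lia; auto.
  - exfalso. destruct SG as [_ S2].
    destruct (S2 (und b) (und b')) as [N1 N2]; try apply und_lt; auto.
    rewrite !pair_of in Hp.
    destruct (Nat.even b), (Nat.even b'); try (apply N1; congruence);
    try (apply N2; destruct (ends (und b)), (ends (und b')); simpl in *; congruence).
Qed.

Lemma Rsum_Sn n F : Rsum (S n) F = Rsum n F + F n.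
Proof. reflexivity. Qed.

Definition b2r (x : bool) : R := if x then 1 else 0.

Lemma Rsum_2B (g : nat -> R) m : Rsum (2*m) g = Rsum m (fun j => g (2*j)%nat + g (2*j+1)%nat).
Proof.
  induction m; [reflexivity|].
  replace (2 * S m)%nat with (S (S (2*m))) by lia.
  rewrite !Rsum_Sn. rewrite IHm. simpl (Rsum (S m) _). replace (S (2*m)) with (2*m+1)%nat by lia. ring.
Qed.


End G.

Lemma degree_sum ends B v : INR (degree B ends v) = Rsum B (fun j => b2r (incb ends v j)).
Proof.
  unfold degree. induction B as [|m IH]; [reflexivity|].
  rewrite seq_S, filter_app, length_app. simpl. rewrite plus_INR, IH.
  unfold b2r. destruct (incb ends v m); simpl; ring.
Qed.

Open Scope R_scope.

Definition Hm (ends : nat -> nat * nat) (e c : nat) : R :=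
  b2r (Nat.eqb (dterm ends e) (dorig ends c) && negb (Nat.eqb c (drev e))).

Lemma b2r_nonneg x : 0 <= b2r x.
Proof. destruct x; simpl; lra. Qed.

Lemma Rsum_b2r_eq n j : (j < n)%nat -> Rsum n (fun e => b2r (Nat.eqb e j)) = 1.
Proof.
  intro Hj. rewrite (Rsum_single n _ j Hj). rewrite Nat.eqb_refl. reflexivity.
  intros i _ Hi. apply Nat.eqb_neq in Hi. rewrite Hi. reflexivity.
Qed.

Section G3.
Variables (V B : nat) (ends : nat -> nat * nat) (d : nat).
Hypothesis SG : simple_graph V B ends.
Hypothesis REG : regular V B ends d.

Lemma indeg v : (v < V)%nat -> Rsum (2*B) (fun e => b2r (Nat.eqb (dterm ends e) v)) = INR d.
Proof.
  intro Hv. rewrite <- (REG v Hv). rewrite degree_sum. rewrite Rsum_2B.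
  apply Rsum_ext. intros j Hj. rewrite dt_e, dt_o. unfold incb.
  destruct SG as [S1 _]. destruct (S1 j Hj) as [_ [_ Hne]].
  destruct (Nat.eqb_spec (snd (ends j)) v), (Nat.eqb_spec (fst (ends j)) v); simpl;
    try lra; congruence.
Qed.

Lemma outdeg v : (v < V)%nat -> Rsum (2*B) (fun e => b2r (Nat.eqb (dorig ends e) v)) = INR d.
Proof.
  intro Hv. rewrite <- (REG v Hv). rewrite degree_sum. rewrite Rsum_2B.
  apply Rsum_ext. intros j Hj. rewrite do_e, do_o. unfold incb.
  destruct SG as [S1 _]. destruct (S1 j Hj) as [_ [_ Hne]].
  destruct (Nat.eqb_spec (snd (ends j)) v), (Nat.eqb_spec (fst (ends j)) v); simpl;
    try lra; congruence.
Qed.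

Lemma Hm_split e c : Hm ends e c = b2r (Nat.eqb (dterm ends e) (dorig ends c)) - b2r (Nat.eqb e (drev c)).
Proof.
  unfold Hm. destruct (Nat.eqb_spec e (drev c)) as [->|Hne].
  - rewrite dt_drev, Nat.eqb_refl, drev_drev, Nat.eqb_refl. simpl. lra.
  - assert (c <> drev e) by (intro; subst; apply Hne; rewrite drev_drev; auto).
    apply Nat.eqb_neq in H. rewrite H. destruct (Nat.eqb (dterm ends e) (dorig ends c)); simpl; lra.
Qed.

Lemma Hm_colsum c : (c < 2*B)%nat -> Rsum (2*B) (fun e => Hm ends e c) = INR d - 1.
Proof.
  intro Hc. rewrite (Rsum_ext _ _ (fun e => b2r (Nat.eqb (dterm ends e) (dorig ends c)) - b2r (Nat.eqb e (drev c))))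
    by (intros; apply Hm_split).
  rewrite Rsum_minus. rewrite indeg by (apply (do_lt ends V B SG); auto).
  rewrite Rsum_b2r_eq by (apply drev_lt; auto). reflexivity.
Qed.

End G3.

Open Scope R_scope.

Lemma Csum_2B (g : nat -> Cpx) m : Csum (2*m) g = Csum m (fun j => Cadd (g (2*j)%nat) (g (2*j+1)%nat)).
Proof.
  apply Cpx_eq.
  - rewrite !Csum_fst, Rsum_2B. reflexivity.
  - rewrite !Csum_snd, Rsum_2B. reflexivity.
Qed.

Lemma Cmul_C0_l z : Cmul C0 z = C0.
Proof. apply Cpx_eq; unfold Cmul, C0; simpl; ring. Qed.
Lemma Cmul_C0_r z : Cmul z C0 = C0.
Proof. apply Cpx_eq; unfold Cmul, C0; simpl; ring. Qed.
Lemma Cconj_C0 : Cconj C0 = C0.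
Proof. apply Cpx_eq; unfold Cconj, C0; simpl; ring. Qed.
Lemma Cadd_C0_l z : Cadd C0 z = z.
Proof. apply Cpx_eq; unfold Cadd, C0; simpl; ring. Qed.
Lemma Cadd_C0_r z : Cadd z C0 = z.
Proof. apply Cpx_eq; unfold Cadd, C0; simpl; ring. Qed.
Lemma Cmul_comm z w : Cmul z w = Cmul w z.
Proof. apply Cpx_eq; unfold Cmul; simpl; ring. Qed.

Section U.
Variables (V B : nat) (ends : nat -> nat * nat) (sigma : nat -> nat -> nat -> Cpx).
Hypothesis SG : simple_graph V B ends.
Hypothesis VU : vertex_unitary V B ends sigma.

Lemma S_unitary b b' : (b < 2*B)%nat -> (b' < 2*B)%nat ->
  Csum (2*B) (fun c => Cmul (Smat ends sigma b c) (Cconj (Smat ends sigma b' c))) =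
  if Nat.eqb b b' then C1 else C0.
Proof.
  intros Hb Hb'. unfold Smat.
  destruct (Nat.eq_dec (dterm ends b) (dterm ends b')) as [Ht|Ht].
  - rewrite <- Ht. set (v := dterm ends b).
    rewrite Csum_2B.
    assert (Hv : (v < V)%nat) by (apply (dt_lt ends V B SG); auto).
    destruct (VU v (und b') (und b) Hv) as [U1 _];
      try (apply und_lt; auto); [unfold v; rewrite Ht; apply incb_dt| apply incb_dt|].
    transitivity (if und b' =? und b then C1 else C0).
    + rewrite <- U1. apply Csum_ext. intros j Hj.
      rewrite do_e, do_o, und_e, und_o. unfold incb.
      destruct SG as [S1 _]. destruct (S1 j Hj) as [_ [_ Hne]].
      destruct (Nat.eqb_spec v (fst (ends j))), (Nat.eqb_spec v (snd (ends j)));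
      destruct (Nat.eqb_spec (fst (ends j)) v), (Nat.eqb_spec (snd (ends j)) v);
      simpl; try congruence; rewrite ?Cmul_C0_l, ?Cconj_C0, ?Cadd_C0_l, ?Cadd_C0_r;
      try reflexivity; apply Cmul_comm.
    + destruct (Nat.eqb_spec b b') as [->|Hne]; [rewrite Nat.eqb_refl; auto|].
      destruct (Nat.eqb_spec (und b') (und b)) as [Hu|Hu]; auto.
      exfalso. apply Hne.
      destruct (bcase b) as [[j ->]|[j ->]]; destruct (bcase b') as [[j' ->]|[j' ->]];
      rewrite ?und_e, ?und_o in Hu; subst j'; try reflexivity; exfalso;
      rewrite ?dt_e, ?dt_o in Ht; destruct SG as [S1 _]; apply (S1 j); try lia; auto.
  - destruct (Nat.eqb_spec b b') as [->|Hne]; [congruence|].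
    apply Csum_zero. intros c Hc.
    destruct (Nat.eqb_spec (dterm ends b) (dorig ends c)), (Nat.eqb_spec (dterm ends b') (dorig ends c));
      try congruence; rewrite ?Cconj_C0, ?Cmul_C0_l, ?Cmul_C0_r; reflexivity.
Qed.

End U.

Open Scope R_scope.

Lemma Csum_mul_l n a F : Csum n (fun i => Cmul a (F i)) = Cmul a (Csum n F).
Proof.
  induction n; [apply Cpx_eq; unfold Cmul, C0; simpl; ring|].
  rewrite !Csum_S, IHn. apply Cpx_eq; unfold Cmul, Cadd; simpl; ring.
Qed.
Lemma Csum_mul_r n a F : Csum n (fun i => Cmul (F i) a) = Cmul (Csum n F) a.
Proof.
  rewrite Cmul_comm, <- Csum_mul_l. apply Csum_ext. intros. apply Cmul_comm.
Qed.
Lemma Cconj_Csum n F : Cconj (Csum n F) = Csum n (fun i => Cconj (F i)).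
Proof.
  induction n; [apply Cpx_eq; unfold Cconj, C0; simpl; ring|].
  rewrite !Csum_S, <- IHn. apply Cpx_eq; unfold Cconj, Cadd; simpl; ring.
Qed.
Lemma Cconj_mul z w : Cconj (Cmul z w) = Cmul (Cconj z) (Cconj w).
Proof. apply Cpx_eq; unfold Cconj, Cmul; simpl; ring. Qed.
Lemma Csum_swap n m (F : nat -> nat -> Cpx) :
  Csum n (fun i => Csum m (fun j => F i j)) = Csum m (fun j => Csum n (fun i => F i j)).
Proof.
  apply Cpx_eq.
  - rewrite !Csum_fst. rewrite (Rsum_ext n _ (fun i => Rsum m (fun j => fst (F i j))))
      by (intros; apply Csum_fst).
    rewrite Rsum_swap. apply Rsum_ext. intros. symmetry. apply Csum_fst.
  - rewrite !Csum_snd. rewrite (Rsum_ext n _ (fun i => Rsum m (fun j => snd (F i j))))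
      by (intros; apply Csum_snd).
    rewrite Rsum_swap. apply Rsum_ext. intros. symmetry. apply Csum_snd.
Qed.
Lemma Csum_prod n m F G : Cmul (Csum n F) (Csum m G) = Csum n (fun i => Csum m (fun j => Cmul (F i) (G j))).
Proof.
  rewrite <- Csum_mul_r. apply Csum_ext. intros. rewrite Csum_mul_l. reflexivity.
Qed.
Lemma Cabs2_fst z : Cabs2 z = fst (Cmul z (Cconj z)).
Proof. destruct z; unfold Cabs2, Cmul, Cconj; simpl; ring. Qed.

Lemma row_norm n (A : nat -> nat -> Cpx) (x : nat -> Cpx) :
  (forall k k', (k < n)%nat -> (k' < n)%nat ->
     Csum n (fun c => Cmul (A k c) (Cconj (A k' c))) = if Nat.eqb k k' then Defs.C1 else C0) ->
  Rsum n (fun c => Cabs2 (Csum n (fun k => Cmul (x k) (A k c)))) = Rsum n (fun k => Cabs2 (x k)).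
Proof.
  intro HA.
  rewrite (Rsum_ext n _ (fun c => fst (Csum n (fun k => Csum n (fun k' =>
      Cmul (Cmul (x k) (Cconj (x k'))) (Cmul (A k c) (Cconj (A k' c)))))))).
  2:{ intros c Hc. rewrite Cabs2_fst. f_equal. rewrite Cconj_Csum, Csum_prod.
      apply Csum_ext; intros; apply Csum_ext; intros.
      rewrite Cconj_mul. apply Cpx_eq; unfold Cmul, Cconj; simpl; ring. }
  rewrite <- Csum_fst. rewrite Csum_swap.
  rewrite (Csum_ext n _ (fun k => Csum n (fun k' => Cmul (Cmul (x k) (Cconj (x k')))
         (if Nat.eqb k k' then Defs.C1 else C0)))).
  2:{ intros k Hk. rewrite Csum_swap. apply Csum_ext. intros k' Hk'.
      rewrite Csum_mul_l. rewrite HA by auto. reflexivity. }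
  rewrite Csum_fst. apply Rsum_ext. intros k Hk.
  rewrite (Csum_single n _ k Hk).
  - rewrite Nat.eqb_refl, Cabs2_fst. f_equal. apply Cpx_eq; unfold Cmul, Defs.C1; simpl; ring.
  - intros i Hi Hne. apply Nat.eqb_neq in Hne. rewrite Nat.eqb_sym, Hne. apply Cmul_C0_r.
Qed.

Open Scope R_scope.

Section U2.
Variables (V B : nat) (ends : nat -> nat * nat) (sigma : nat -> nat -> nat -> Cpx) (L : nat -> R).
Hypothesis SG : simple_graph V B ends.
Hypothesis VU : vertex_unitary V B ends sigma.

Lemma U_unitary k b b' : (b < 2*B)%nat -> (b' < 2*B)%nat ->
  Csum (2*B) (fun c => Cmul (Umat L ends sigma k b c) (Cconj (Umat L ends sigma k b' c))) =
  if Nat.eqb b b' then Defs.C1 else C0.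
Proof.
  intros Hb Hb'. unfold Umat.
  rewrite (Csum_ext _ _ (fun c => Cmul (Cmul (Cexpi (k * L (und b))) (Cconj (Cexpi (k * L (und b')))))
     (Cmul (Smat ends sigma b c) (Cconj (Smat ends sigma b' c))))).
  2:{ intros. rewrite Cconj_mul. apply Cpx_eq; unfold Cmul, Cconj; simpl; ring. }
  rewrite Csum_mul_l. rewrite (S_unitary V B ends sigma SG VU b b' Hb Hb').
  destruct (Nat.eqb_spec b b') as [->|]; [|apply Cmul_C0_r].
  unfold Cexpi, Cmul, Cconj, Defs.C1. simpl. apply Cpx_eq; simpl.
  - pose proof (sin2_cos2 (k * L (und b'))). unfold Rsqr in H. lra.
  - ring.
Qed.

Lemma Upow_row k t b : (b < 2*B)%nat ->
  Rsum (2*B) (fun c => Cabs2 (Cmatpow (2*B) (Umat L ends sigma k) t b c)) = 1.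
Proof.
  revert b. induction t; intros b Hb.
  - simpl. rewrite (Rsum_single _ _ b Hb).
    + rewrite Nat.eqb_refl. unfold Cabs2, Defs.C1; simpl; ring.
    + intros i _ Hne. rewrite (proj2 (Nat.eqb_neq b i)) by auto. unfold Cabs2, C0; simpl; ring.
  - simpl. unfold Cmatmul. rewrite row_norm. apply IHt; auto.
    intros; apply U_unitary; auto.
Qed.

Lemma S_rowsum b : (b < 2*B)%nat -> Rsum (2*B) (fun c => Cabs2 (Smat ends sigma b c)) = 1.
Proof.
  intro Hb. pose proof (S_unitary V B ends sigma SG VU b b Hb Hb) as H.
  rewrite Nat.eqb_refl in H. apply (f_equal fst) in H. rewrite Csum_fst in H.
  simpl in H. rewrite <- H. apply Rsum_ext. intros. apply Cabs2_fst.
Qed.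

End U2.

Open Scope R_scope.

Fixpoint Rpow (n : nat) (A : nat -> nat -> R) (t : nat) (b c : nat) : R :=
  match t with
  | O => b2r (Nat.eqb b c)
  | S t' => Rsum n (fun j => Rpow n A t' b j * A j c)
  end.

Lemma Csum_RtoC n F : Csum n (fun i => RtoC (F i)) = RtoC (Rsum n F).
Proof. apply Cpx_eq; [rewrite Csum_fst|rewrite Csum_snd]; simpl; [reflexivity|apply Rsum_const0]. Qed.

Lemma Cmatpow_real n A t b c : Cmatpow n (fun i j => RtoC (A i j)) t b c = RtoC (Rpow n A t b c).
Proof.
  revert c. induction t; intro c.
  - simpl. destruct (Nat.eqb b c); reflexivity.
  - simpl. unfold Cmatmul. rewrite <- Csum_RtoC. apply Csum_ext. intros i _.
    rewrite IHt. apply Cpx_eq; unfold Cmul, RtoC; simpl; ring.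
Qed.

Lemma Rpow_nonneg n A t b c : (forall i j, 0 <= A i j) -> 0 <= Rpow n A t b c.
Proof.
  intro HA. revert c; induction t; intro c; simpl.
  - apply b2r_nonneg.
  - apply Rsum_nonneg. intros. apply Rmult_le_pos; auto.
Qed.

Lemma Rpow_rowsum n A t b : (b < n)%nat -> (forall j, (j < n)%nat -> Rsum n (fun c => A j c) = 1) ->
  Rsum n (fun c => Rpow n A t b c) = 1.
Proof.
  intros Hb HA. induction t; simpl.
  - rewrite (Rsum_ext _ _ (fun c => b2r (Nat.eqb c b))) by (intros; rewrite Nat.eqb_sym; auto).
    apply Rsum_b2r_eq; auto.
  - rewrite Rsum_swap. rewrite <- IHt. apply Rsum_ext. intros j Hj.
    rewrite Rsum_mult_l, HA by auto. ring.
Qed.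

Definition endp (b : nat) (l : list nat) : nat := match l with [] => b | c :: _ => c end.

Section W.
Variables (V B : nat) (ends : nat -> nat * nat) (sigma : nat -> nat -> nat -> Cpx) (L : nat -> R).
Hypothesis SG : simple_graph V B ends.
Hypothesis VU : vertex_unitary V B ends sigma.

Let n := (2*B)%nat.
Let Sm := Smat ends sigma.
Let Mr (i j : nat) := Cabs2 (Sm i j).
Let Up t x := Cmatpow n (Umat L ends sigma x) t.
Let Mp t := Rpow n Mr t.

Fixpoint rwalk (b : nat) (l : list nat) : Prop :=
  match l with
  | [] => True
  | c :: l' => rwalk b l' /\ (c < n)%nat /\ Sm (endp b l') c <> C0
  end.

Lemma Cabs2_C0 : Cabs2 C0 = 0.
Proof. unfold Cabs2, C0; simpl; ring. Qed.

Lemma Umat_C0 x j c : Sm j c = C0 -> Umat L ends sigma x j c = C0.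
Proof. intro E. unfold Umat. fold Sm. rewrite E. apply Cmul_C0_r. Qed.

Lemma walk_zero b : forall t c, (c < n)%nat -> (forall l, rwalk b l -> length l = t -> endp b l <> c) ->
  (forall x, Up t x b c = C0) /\ Mp t b c = 0.
Proof.
  induction t; intros c Hc H.
  - assert (b <> c) by (apply (H []); simpl; auto).
    apply Nat.eqb_neq in H0. unfold Up, Mp; simpl. rewrite H0. split; reflexivity.
  - assert (Hj : forall j, (j < n)%nat -> ((forall x, Up t x b j = C0) /\ Mp t b j = 0) \/ Sm j c = C0).
    { intros j Hjn. destruct (classic (Sm j c = C0)) as [E|E]; [right; auto|left].
      apply IHt; auto. intros l Hl Hlen Hend. apply (H (c :: l)); simpl; auto.
      split; [auto|]. split; [auto|rewrite Hend; auto]. }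
    split.
    + intro x. unfold Up. simpl. unfold Cmatmul. apply Csum_zero. intros j Hjn.
      destruct (Hj j Hjn) as [[E _]|E].
      * unfold Up in E. rewrite E. apply Cmul_C0_l.
      * rewrite Umat_C0 by auto. apply Cmul_C0_r.
    + unfold Mp. simpl. rewrite (Rsum_ext _ _ (fun _ => 0)). apply Rsum_const0.
      intros j Hjn. destruct (Hj j Hjn) as [[_ E]|E].
      * unfold Mp in E. rewrite E. ring.
      * unfold Mr. rewrite E, Cabs2_C0. ring.
Qed.

Lemma Cabs2_Umat x j c : Cabs2 (Umat L ends sigma x j c) = Mr j c.
Proof.
  unfold Umat, Mr. rewrite Cabs2_mul. fold Sm. unfold Cexpi, Cabs2 at 1. simpl.
  pose proof (sin2_cos2 (x * L (und j))). unfold Rsqr in H.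
  replace (cos (x * L (und j)) * (cos (x * L (und j)) * 1) + sin (x * L (und j)) * (sin (x * L (und j)) * 1))
    with 1 by lra. ring.
Qed.

Lemma walk_uniq b : (b < n)%nat -> forall t l, rwalk b l -> length l = t ->
  (forall l', rwalk b l' -> length l' = t -> endp b l' = endp b l -> l' = l) ->
  forall x, Cabs2 (Up t x b (endp b l)) = Mp t b (endp b l).
Proof.
  intro Hb. induction t; intros l Hl Hlen Hu x.
  - destruct l; [|discriminate]. unfold Up, Mp; simpl. rewrite Nat.eqb_refl.
    unfold Cabs2, Defs.C1, b2r; simpl; ring.
  - destruct l as [|c l0]; [discriminate|]. simpl in Hlen. injection Hlen as Hlen.
    destruct Hl as [Hl0 [Hc HS]]. simpl endp.
    set (j0 := endp b l0) in *.
    assert (Hj0 : (j0 < n)%nat).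
    { unfold j0. destruct l0 as [|c0 l1]; simpl; auto. simpl in Hl0. tauto. }
    assert (Hu0 : forall l', rwalk b l' -> length l' = t -> endp b l' = j0 -> l' = l0).
    { intros l' Hl' Hlen' He'. assert (c :: l' = c :: l0) as E.
      { apply Hu; simpl; auto. split; [auto|]. split; auto. rewrite He'. auto. }
      injection E; auto. }
    assert (IH := IHt l0 Hl0 Hlen Hu0 x). fold j0 in IH.
    assert (Hj : forall j, (j < n)%nat -> j <> j0 ->
       ((forall x, Up t x b j = C0) /\ Mp t b j = 0) \/ Sm j c = C0).
    { intros j Hjn Hne. destruct (classic (Sm j c = C0)) as [E|E]; [right; auto|left].
      apply walk_zero; auto. intros l1 Hl1 Hlen1 Hend1.
      assert (c :: l1 = c :: l0) as E2.
      { apply Hu; simpl; auto. split; [auto|]. split; auto. rewrite Hend1. auto. }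
      injection E2 as E2. subst l1. apply Hne. rewrite <- Hend1. reflexivity. }
    unfold Up, Mp. simpl. unfold Cmatmul.
    rewrite (Csum_single _ _ j0 Hj0).
    2:{ intros j Hjn Hne. destruct (Hj j Hjn Hne) as [[E _]|E].
        - unfold Up in E. rewrite E. apply Cmul_C0_l.
        - rewrite Umat_C0 by auto. apply Cmul_C0_r. }
    rewrite (Rsum_single _ _ j0 Hj0).
    2:{ intros j Hjn Hne. destruct (Hj j Hjn Hne) as [[_ E]|E].
        - unfold Mp in E. rewrite E. ring.
        - unfold Mr. rewrite E, Cabs2_C0. ring. }
    rewrite Cabs2_mul, Cabs2_Umat. unfold Up, Mp in IH. rewrite IH. reflexivity.
Qed.

Lemma good_entry b c t : (b < n)%nat -> (c < n)%nat ->
  (forall l l', rwalk b l -> rwalk b l' -> length l = t -> length l' = t ->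
     endp b l = c -> endp b l' = c -> l = l') ->
  forall x, Cabs2 (Up t x b c) = Mp t b c.
Proof.
  intros Hb Hc H x.
  destruct (classic (exists l, rwalk b l /\ length l = t /\ endp b l = c)) as [[l [Hl [Hlen He]]]|N].
  - subst c. apply walk_uniq with (t := t); auto.
  - assert (Z : (forall x, Up t x b c = C0) /\ Mp t b c = 0).
    { apply walk_zero; auto. intros l Hl Hlen He. apply N. exists l; auto. }
    destruct Z as [Z1 Z2]. rewrite Z1, Z2. apply Cabs2_C0.
Qed.

End W.

Open Scope R_scope.

Lemma ta_const g m a : is_time_average g m -> (forall k, g k = a) -> m = a.
Proof.
  intros H Hg. apply Rle_antisym; apply Rnot_lt_le; intro Hlt.
  - destruct (H (m - a)) as [K0 HK]; [lra|].
    destruct (HK (Rmax K0 0 + 1)) as [pr Hpr]; [unfold Rmax; destruct Rle_dec; lra|unfold Rmax; destruct Rle_dec; lra|].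
    set (K := Rmax K0 0 + 1) in *.
    assert (HK0 : 0 < K) by (unfold K, Rmax; destruct Rle_dec; lra).
    assert (E : RiemannInt pr = a * (K - 0)).
    { rewrite <- (RiemannInt_P15 (RiemannInt_P14 0 K a)). apply RiemannInt_P18; [lra|].
      intros; unfold fct_cte; auto. }
    rewrite E in Hpr. replace (a * (K - 0) / K) with a in Hpr by (field; lra).
    rewrite Rabs_left in Hpr; lra.
  - destruct (H (a - m)) as [K0 HK]; [lra|].
    destruct (HK (Rmax K0 0 + 1)) as [pr Hpr]; [unfold Rmax; destruct Rle_dec; lra|unfold Rmax; destruct Rle_dec; lra|].
    set (K := Rmax K0 0 + 1) in *.
    assert (HK0 : 0 < K) by (unfold K, Rmax; destruct Rle_dec; lra).
    assert (E : RiemannInt pr = a * (K - 0)).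
    { rewrite <- (RiemannInt_P15 (RiemannInt_P14 0 K a)). apply RiemannInt_P18; [lra|].
      intros; unfold fct_cte; auto. }
    rewrite E in Hpr. replace (a * (K - 0) / K) with a in Hpr by (field; lra).
    rewrite Rabs_right in Hpr; lra.
Qed.

Lemma ta_nonneg g m : is_time_average g m -> (forall k, 0 <= g k) -> 0 <= m.
Proof.
  intros H Hg. apply Rnot_lt_le; intro Hlt.
  destruct (H (- m)) as [K0 HK]; [lra|].
  destruct (HK (Rmax K0 0 + 1)) as [pr Hpr]; [unfold Rmax; destruct Rle_dec; lra|unfold Rmax; destruct Rle_dec; lra|].
  set (K := Rmax K0 0 + 1) in *.
  assert (HK0 : 0 < K) by (unfold K, Rmax; destruct Rle_dec; lra).
  assert (E : 0 * (K - 0) <= RiemannInt pr).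
  { rewrite <- (RiemannInt_P15 (RiemannInt_P14 0 K 0)). apply RiemannInt_P19; [lra|].
    intros; unfold fct_cte; auto. }
  assert (0 <= RiemannInt pr / K) by (unfold Rdiv; apply Rmult_le_pos; [lra|apply Rlt_le, Rinv_0_lt_compat; lra]).
  rewrite Rabs_right in Hpr; lra.
Qed.

Lemma ta_add f g m1 m2 : is_time_average f m1 -> is_time_average g m2 ->
  is_time_average (fun k => f k + g k) (m1 + m2).
Proof.
  intros H1 H2 eps Heps.
  destruct (H1 (eps/2)) as [K1 HK1]; [lra|].
  destruct (H2 (eps/2)) as [K2 HK2]; [lra|].
  exists (Rmax K1 K2). intros K HK HK0.
  destruct (HK1 K) as [pr1 Hp1]; [apply Rle_lt_trans with (Rmax K1 K2); [apply Rmax_l|auto]|auto|].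
  destruct (HK2 K) as [pr2 Hp2]; [apply Rle_lt_trans with (Rmax K1 K2); [apply Rmax_r|auto]|auto|].
  pose (pr3 := RiemannInt_P10 1 pr1 pr2).
  assert (pr : Riemann_integrable (fun k => f k + g k) 0 K).
  { refine (@Riemann_integrable_ext (fun x => f x + 1 * g x) (fun k => f k + g k) 0 K _ pr3). intros; ring. }
  exists pr.
  assert (E : RiemannInt pr = RiemannInt pr1 + 1 * RiemannInt pr2).
  { rewrite <- (RiemannInt_P13 pr1 pr2 pr3). apply RiemannInt_P18; [lra|]. intros; ring. }
  rewrite E. replace ((RiemannInt pr1 + 1 * RiemannInt pr2) / K - (m1 + m2)) with
    ((RiemannInt pr1 / K - m1) + (RiemannInt pr2 / K - m2)) by (field; lra).
  eapply Rle_lt_trans; [apply Rabs_triang|]. lra.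
Qed.

Lemma ta_sum N (g : nat -> R -> R) (m : nat -> R) :
  (forall c, (c < N)%nat -> is_time_average (g c) (m c)) ->
  is_time_average (fun k => Rsum N (fun c => g c k)) (Rsum N m).
Proof.
  induction N; intro H.
  - simpl. intros eps Heps. exists 0. intros K HK _.
    assert (pr : Riemann_integrable (fun _ => 0) 0 K).
    { refine (@Riemann_integrable_ext (fct_cte 0) (fun _ => 0) 0 K _ (RiemannInt_P14 0 K 0)). intros; reflexivity. }
    exists pr.
    assert (E : RiemannInt pr = 0 * (K - 0)).
    { rewrite <- (RiemannInt_P15 (RiemannInt_P14 0 K 0)). apply RiemannInt_P18; [lra|].
      intros; unfold fct_cte; auto. }
    rewrite E. replace (0 * (K - 0) / K - 0) with 0 by (field; lra). rewrite Rabs_R0. lra.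
  - simpl. apply ta_add; [apply IHN; intros; apply H; lia | apply H; lia].
Qed.

Open Scope nat_scope.

Fixpoint chain (P : nat -> nat -> Prop) (l : list nat) : Prop :=
  match l with
  | x :: l' => match l' with [] => True | y :: _ => P x y /\ chain P l' end
  | [] => True
  end.

Lemma chain_cons_ne P x l : l <> [] -> (chain P (x :: l) <-> P x (hd 0 l) /\ chain P l).
Proof. destruct l; [congruence|]. simpl. tauto. Qed.

Lemma chain_app_iff P l1 l2 : l1 <> [] -> l2 <> [] ->
  (chain P (l1 ++ l2) <-> chain P l1 /\ chain P l2 /\ P (last l1 0) (hd 0 l2)).
Proof.
  intros N1 N2. induction l1 as [|x l1 IH]; [congruence|].
  destruct l1 as [|y l1].
  - destruct l2 as [|z l2]; [congruence|]. simpl. tauto.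
  - assert (N : y :: l1 <> []) by discriminate.
    specialize (IH N). rewrite <- app_comm_cons.
    rewrite (chain_cons_ne P x ((y :: l1) ++ l2)) by discriminate.
    rewrite (chain_cons_ne P x (y :: l1)) by discriminate.
    rewrite IH. simpl. tauto.
Qed.

Lemma chain_tail P x l : chain P (x :: l) -> chain P l.
Proof. destruct l; simpl; tauto. Qed.

Lemma chain_impl (P P' : nat -> nat -> Prop) l : (forall x y, P x y -> P' x y) -> chain P l -> chain P' l.
Proof.
  intro H. induction l as [|x l IH]; simpl; auto.
  destruct l; auto. intros [H1 H2]. split; auto.
Qed.

Lemma chain_map (P P' : nat -> nat -> Prop) f l : (forall x y, P x y -> P' (f x) (f y)) -> chain P l -> chain P' (map f l).
Proof.
  intro H. induction l as [|x l IH]; simpl; auto.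
  destruct l; simpl; auto. intros [H1 H2]. split; auto. apply IH. exact H2.
Qed.

Lemma chain_rev P l : chain P l -> chain (fun x y => P y x) (rev l).
Proof.
  induction l as [|x l IH]; [simpl; auto|].
  intro H. change (rev (x :: l)) with (rev l ++ [x]).
  destruct l as [|y l]; [simpl; auto|].
  destruct H as [H1 H2]. specialize (IH H2).
  apply chain_app_iff.
  - change (rev (y :: l)) with (rev l ++ [y]). intro E. destruct (app_eq_nil _ _ E); discriminate.
  - discriminate.
  - split; auto. split; [simpl; auto|]. simpl hd.
    change (rev (y :: l)) with (rev l ++ [y]). rewrite last_last. exact H1.
Qed.

Lemma chain_nth P l i : chain P l -> (S i < length l)%nat -> P (nth i l 0) (nth (S i) l 0).
Proof.
  revert i. induction l as [|x l IH]; intros i H Hi; simpl in *; [lia|].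
  destruct l as [|y l]; simpl in *; [lia|].
  destruct H as [H1 H2]. destruct i; auto.
  apply (IH i H2). simpl. lia.
Qed.

Lemma rejoin q q' : length q = length q' -> q <> [] -> hd 0 q <> hd 0 q' -> last q 0 = last q' 0 ->
  exists a a' y r r', q = a ++ y :: r /\ q' = a' ++ y :: r' /\ length a = length a' /\ a <> [] /\
    last a 0 <> last a' 0 /\ hd 0 a = hd 0 q /\ hd 0 a' = hd 0 q'.
Proof.
  revert q'. induction q as [|x q1 IH]; intros q' Hl Hn Hh Hlast; [congruence|].
  destruct q' as [|x' q1']; [discriminate|]. simpl in Hl, Hh. injection Hl as Hl.
  destruct q1 as [|y q2]; destruct q1' as [|y' q2']; simpl in Hl; try discriminate.
  - simpl in Hlast. congruence.
  - destruct (Nat.eq_dec y y') as [<-|Hy].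
    + exists [x], [x'], y, q2, q2'. simpl. repeat split; auto; discriminate.
    + destruct (IH (y' :: q2')) as [a [a' [z [r [r' [E1 [E2 [E3 [E4 [E5 [E6 E7]]]]]]]]]]];
        simpl; auto; try discriminate.
      exists (x :: a), (x' :: a'), z, r, r'. rewrite E1, E2. simpl. repeat split; auto.
      all: try discriminate.
      all: try (destruct a; [congruence|]; destruct a'; [discriminate|]; simpl in *; exact E5).
Qed.

Lemma branch P w : forall w' b, chain P (b :: w) -> chain P (b :: w') -> length w = length w' ->
  last (b :: w) 0 = last (b :: w') 0 -> w <> w' ->
  exists p e q q', chain P (b :: p) /\ last (b :: p) 0 = e /\ chain P (e :: q) /\ chain P (e :: q') /\
    (length p + length q = length w)%nat /\ length q = length q' /\ q <> [] /\ hd 0 q <> hd 0 q' /\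
    last q 0 = last q' 0.
Proof.
  induction w as [|x w1 IH]; intros w' b H1 H2 Hl Hlast Hne.
  - destruct w'; [congruence|discriminate].
  - destruct w' as [|x' w1']; [discriminate|]. simpl in Hl. injection Hl as Hl.
    destruct (Nat.eq_dec x x') as [<-|Hx].
    + assert (w1 <> w1') by congruence.
      destruct H1 as [P1 C1]. destruct H2 as [P2 C2].
      destruct (IH w1' x C1 C2 Hl) as [p [e [q [q' [D1 [D2 [D3 [D4 [D5 [D6 [D7 [D8 D9]]]]]]]]]]]]; auto.
      exists (x :: p), e, q, q'. repeat split; auto.
      all: try (simpl; lia).

    + exists [], b, (x :: w1), (x' :: w1'). simpl. repeat split; auto.
      all: try discriminate.
      all: simpl in H1, H2; tauto.
Qed.

Open Scope nat_scope.


Definition Qr (ends : nat -> nat * nat) (x y : nat) : Prop :=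
  dterm ends x = dorig ends y /\ y <> drev x.

Lemma hd_rev (l : list nat) : hd 0 (rev l) = last l 0.
Proof.
  induction l as [|x l IH]; [reflexivity|].
  simpl rev. destruct l as [|y l]; [reflexivity|].
  assert (E : rev (y :: l) <> []) by (simpl; intro E; destruct (app_eq_nil _ _ E); discriminate).
  destruct (rev (y :: l)) eqn:Er; [congruence|]. simpl in *. exact IH.
Qed.

Lemma last_map_drev (l : list nat) : l <> [] -> last (map drev l) 0 = drev (last l 0).
Proof.
  induction l as [|x l IH]; intro H; [congruence|].
  destruct l as [|y l]; [reflexivity|].
  change (map drev (x :: y :: l)) with (drev x :: map drev (y :: l)).
  change (last (drev x :: map drev (y :: l)) 0) with (last (map drev (y :: l)) 0).
  rewrite IH by discriminate. reflexivity.
Qed.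

Lemma last_cons2 (x : nat) l : l <> [] -> last (x :: l) 0 = last l 0.
Proof. destruct l; [congruence|reflexivity]. Qed.

Lemma cycle_of_chain B ends p : p <> [] -> (forall x, In x p -> (x < 2*B)%nat) ->
  chain (Qr ends) (p ++ [hd 0 p]) -> is_cycle B ends p.
Proof.
  intros Hne Hlt Hc. split; [auto|]. split; [auto|].
  intros i Hi.
  assert (Hl : length (p ++ [hd 0 p]) = S (length p)) by (rewrite length_app; simpl; lia).
  assert (Hq := chain_nth _ _ i Hc ltac:(lia)).
  destruct (Nat.eq_dec (S i) (length p)) as [E|E].
  - rewrite E, Nat.Div0.mod_same.
    rewrite app_nth1 in Hq by lia. rewrite app_nth2 in Hq by lia.
    rewrite E, Nat.sub_diag in Hq. simpl in Hq.
    destruct p; [congruence|]. exact Hq.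
  - rewrite Nat.mod_small by lia.
    rewrite !app_nth1 in Hq by lia. exact Hq.
Qed.

Section Bad.
Variables (V B : nat) (ends : nat -> nat * nat) (sigma : nat -> nat -> nat -> Cpx).
Hypothesis SG : simple_graph V B ends.
Hypothesis NB : no_backscatter V B ends sigma.

Definition Rn (x y : nat) : Prop := (x < 2*B)%nat /\ (y < 2*B)%nat /\ Smat ends sigma x y <> C0.

Lemma Rn_Q x y : Rn x y -> Qr ends x y.
Proof.
  intros [Hx [Hy HS]]. unfold Smat in HS.
  destruct (Nat.eqb_spec (dterm ends x) (dorig ends y)) as [E|E]; [|congruence].
  split; auto. intro Ey. subst y. rewrite und_drev in HS. apply HS.
  apply NB; [apply (dt_lt ends V B SG); auto|apply und_lt; auto|apply incb_dt].
Qed.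

Lemma chain_lt e l : chain Rn (e :: l) -> forall x, In x l -> (x < 2*B)%nat.
Proof.
  revert e. induction l as [|y l IH]; intros e H x Hx; [destruct Hx|].
  destruct H as [[_ [Hy _]] H]. destruct Hx as [<-|Hx]; auto. apply (IH y); auto.
Qed.

Lemma rwalk_chain b l : (b < 2*B)%nat -> rwalk B ends sigma b l ->
  chain Rn (b :: rev l) /\ last (b :: rev l) 0 = endp b l.
Proof.
  intro Hb. induction l as [|c l IH]; intro H; [simpl; auto|].
  destruct H as [Hl [Hc HS]]. destruct (IH Hl) as [C1 C2].
  change (b :: rev (c :: l)) with ((b :: rev l) ++ [c]).
  rewrite last_last. split; [|reflexivity].
  apply chain_app_iff; try discriminate. split; auto. split; [simpl; auto|].
  simpl hd. rewrite C2. split; [|split; auto].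
  destruct l as [|c0 l]; simpl; auto.
  simpl in Hl. tauto.
Qed.
Lemma Q_flip x y : Qr ends x y -> Qr ends (drev y) (drev x).
Proof.
  intros [H1 H2]. split.
  - rewrite dt_drev, do_drev. auto.
  - intro E. apply H2. rewrite <- (drev_drev y), <- E. reflexivity.
Qed.

Lemma last_rev0 (l : list nat) : last (rev l) 0 = hd 0 l.
Proof. rewrite <- (rev_involutive l) at 2. rewrite hd_rev. reflexivity. Qed.

Lemma hd_app0 (l1 l2 : list nat) : l1 <> [] -> hd 0 (l1 ++ l2) = hd 0 l1.
Proof. destruct l1; [congruence|reflexivity]. Qed.

Lemma bad_struct T b t l l' :
  b < 2*B -> rwalk B ends sigma b l -> rwalk B ends sigma b l' -> length l = t -> length l' = t ->
  endp b l = endp b l' -> l <> l' -> t <= T ->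
  exists p z z', chain (Qr ends) (b :: p) /\ (forall x, In x p -> x < 2*B) /\ length p + 3 <= t /\ last (b :: p) 0 < 2*B /\
    z < 2*B /\ z' < 2*B /\ z <> z' /\ Qr ends (last (b :: p) 0) z /\ Qr ends (last (b :: p) 0) z' /\
    on_short_cycle B ends (2*T) (und z) /\ on_short_cycle B ends (2*T) (und z').
Proof.
  intros Hb Hl Hl' Hlen Hlen' Hend Hne HT.
  destruct (rwalk_chain b l Hb Hl) as [C1 E1].
  destruct (rwalk_chain b l' Hb Hl') as [C2 E2].
  assert (Hne' : rev l <> rev l').
  { intro E. apply Hne. rewrite <- (rev_involutive l), E, rev_involutive. reflexivity. }
  destruct (branch Rn (rev l) (rev l') b C1 C2) as
     [p [e [q [q' [D1 [D2 [D3 [D4 [D5 [D6 [D7 [D8 D9]]]]]]]]]]]];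
    [rewrite !length_rev; congruence| congruence| auto|].
  destruct (rejoin q q' D6 D7 D8 D9) as [a [a' [y [r [r' [F1 [F2 [F3 [F4 [F5 [F6 F7]]]]]]]]]]].
  subst q q'. rewrite length_rev in D5.
  rewrite hd_app0 in D8 by auto.
  assert (Ha' : a' <> []) by (intro E; subst a'; destruct a; simpl in F3; [congruence|discriminate]).
  rewrite hd_app0 in D8 by auto.
  change (e :: a ++ y :: r) with ((e :: a) ++ y :: r) in D3.
  change (e :: a' ++ y :: r') with ((e :: a') ++ y :: r') in D4.
  apply chain_app_iff in D3; try discriminate. destruct D3 as [Ca [_ Ly]].
  apply chain_app_iff in D4; try discriminate. destruct D4 as [Ca' [_ Ly']].
  rewrite last_cons2 in Ly, Ly' by auto. simpl hd in Ly, Ly'.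
  destruct a as [|z a1]; [congruence|]. destruct a' as [|z' a1']; [congruence|].
  simpl hd in D8.
  assert (Ez : Rn e z) by (destruct Ca; auto).
  assert (Ez' : Rn e z') by (destruct Ca'; auto).
  assert (Qz := Rn_Q _ _ Ez). assert (Qz' := Rn_Q _ _ Ez').
  assert (La : 2 <= length (z :: a1)).
  { destruct a1 as [|w a1]; simpl; [|lia]. exfalso.
    destruct a1' as [|w' a1']; [|simpl in F3; discriminate].
    simpl in F5, Ly, Ly'. apply D8.
    apply (same_ends ends V B SG); try (destruct Ez; tauto); try (destruct Ez'; tauto).
    - destruct Qz as [Q1 _], Qz' as [Q1' _]. congruence.
    - destruct (Rn_Q _ _ Ly) as [Q1 _], (Rn_Q _ _ Ly') as [Q1' _]. congruence. }
  set (a := z :: a1) in *. set (a' := z' :: a1') in *.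
  set (c := a ++ rev (map drev a')).
  assert (Hcyc : is_cycle B ends c).
  { apply cycle_of_chain.
    - unfold c, a. discriminate.
    - intros x Hx. unfold c in Hx. apply in_app_or in Hx. destruct Hx as [Hx|Hx].
      + apply (chain_lt e a); auto.
      + apply in_rev in Hx. apply in_map_iff in Hx. destruct Hx as [x0 [<- Hx0]].
        apply drev_lt. apply (chain_lt e a'); auto.
    - assert (Ehd : hd 0 c = z) by reflexivity. rewrite Ehd. unfold c. rewrite <- app_assoc.
      assert (Nr : rev (map drev a') <> []).
      { intro E. apply (f_equal (@length nat)) in E. rewrite length_rev, length_map in E. unfold a' in E. discriminate. }
      apply chain_app_iff; [unfold a; discriminate| intro E; destruct (app_eq_nil _ _ E); discriminate|].
      split; [apply (chain_impl Rn); [exact Rn_Q| exact (chain_tail _ _ _ Ca)]|].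
      split.
      + apply chain_app_iff; [exact Nr|discriminate|]. split; [|split; [simpl; auto|]].
        * apply (chain_impl (fun x y => (fun x y => Qr ends y x) y x)); [auto|].
          apply chain_rev. apply (chain_map (Qr ends)); [intros; apply Q_flip; auto|].
          apply (chain_impl Rn); [exact Rn_Q|exact (chain_tail _ _ _ Ca')].
        * rewrite last_rev0. unfold a'. simpl. split.
          -- rewrite dt_drev. destruct Qz as [Q1 _], Qz' as [Q1' _]. congruence.
          -- rewrite drev_drev. auto.
      + rewrite hd_app0 by exact Nr. rewrite hd_rev. rewrite last_map_drev by (unfold a'; discriminate).
        destruct (Rn_Q _ _ Ly) as [Q1 _], (Rn_Q _ _ Ly') as [Q1' _]. split.
        * rewrite do_drev. congruence.
        * intro E. apply F5. rewrite <- (drev_drev (last a 0)), <- E, drev_drev. reflexivity. }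
  assert (Hlc : length c <= 2*T).
  { unfold c. rewrite length_app, length_rev, length_map. rewrite length_app in D5. simpl in D5.
    rewrite <- F3. unfold a. simpl length in *. lia. }
  exists p, z, z'. rewrite D2. repeat split.
  - apply (chain_impl Rn); [exact Rn_Q|exact D1].
  - apply (chain_lt b p D1).
  - rewrite length_app in D5. unfold a in La. simpl length in *. lia.
  - destruct Ez; tauto.
  - destruct Ez; tauto.
  - destruct Ez'; tauto.
  - exact D8.
  - destruct Qz; auto.
  - destruct Qz; auto.
  - destruct Qz'; auto.
  - destruct Qz'; auto.
  - exists c. split; [auto|]. split; [auto|]. exists z. split; auto.
    unfold c. apply in_or_app. left. unfold a. left. reflexivity.
  - exists c. split; [auto|]. split; [auto|]. exists (drev z'). split; [|apply und_drev].
    unfold c. apply in_or_app. right. apply -> in_rev. apply in_map. unfold a'. left. reflexivity.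
Qed.

End Bad.

Open Scope R_scope.
Open Scope R_scope.

Lemma Rsum_ge_two n F i j : (i < n)%nat -> (j < n)%nat -> i <> j ->
  (forall k, (k < n)%nat -> 0 <= F k) -> F i + F j <= Rsum n F.
Proof.
  induction n; intros Hi Hj Hij H; [lia|]. simpl.
  assert (Hn : 0 <= F n) by (apply H; lia).
  assert (Hs : 0 <= Rsum n F) by (apply Rsum_nonneg; intros; apply H; lia).
  destruct (Nat.eq_dec i n) as [->|Hi'].
  - assert (F j <= Rsum n F) by (apply Rsum_ge_term; [lia|intros; apply H; lia]). lra.
  - destruct (Nat.eq_dec j n) as [->|Hj'].
    + assert (F i <= Rsum n F) by (apply Rsum_ge_term; [lia|intros; apply H; lia]). lra.
    + assert (F i + F j <= Rsum n F) by (apply IHn; try lia; intros; apply H; lia). lra.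
Qed.

Definition inb (l : list nat) (j : nat) : bool := if in_dec Nat.eq_dec j l then true else false.

Lemma Rsum_inb B l : NoDup l -> (forall x, In x l -> (x < B)%nat) ->
  Rsum B (fun j => b2r (inb l j)) = INR (length l).
Proof.
  induction l as [|x l IH]; intros Hnd Hlt.
  - simpl. unfold inb. simpl. apply Rsum_const0.
  - inversion Hnd; subst.
    rewrite (Rsum_ext _ _ (fun j => b2r (Nat.eqb j x) + b2r (inb l j))).
    + rewrite Rsum_plus, Rsum_b2r_eq by (apply Hlt; left; auto).
      rewrite IH; auto. simpl length. rewrite S_INR. ring.
      intros; apply Hlt; right; auto.
    + intros j _. unfold inb. destruct (Nat.eqb_spec j x) as [->|Hne].
      * destruct (in_dec Nat.eq_dec x (x :: l)) as [_|N]; [|exfalso; apply N; left; auto].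
        destruct (in_dec Nat.eq_dec x l); [contradiction|]. simpl. ring.
      * destruct (in_dec Nat.eq_dec j (x :: l)) as [I|N]; destruct (in_dec Nat.eq_dec j l) as [I'|N'];
          simpl; try ring.
        -- destruct I; [congruence|contradiction].
        -- exfalso; apply N; right; auto.
Qed.

Section Count.
Variables (V B : nat) (ends : nat -> nat * nat) (d : nat).
Hypothesis SG : simple_graph V B ends.
Hypothesis REG : regular V B ends d.

Fixpoint Hp (m b e : nat) : R :=
  match m with
  | O => b2r (Nat.eqb b e)
  | S m' => Rsum (2*B) (fun j => Hm ends b j * Hp m' j e)
  end.

Lemma Hm_nonneg x y : 0 <= Hm ends x y.
Proof. apply b2r_nonneg. Qed.

Lemma Hp_nonneg m b e : 0 <= Hp m b e.
Proof.
  revert b. induction m; intro b; simpl; [apply b2r_nonneg|].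
  apply Rsum_nonneg. intros. apply Rmult_le_pos; auto. apply Hm_nonneg.
Qed.

Lemma Hm_Q x y : Qr ends x y -> Hm ends x y = 1.
Proof.
  intros [H1 H2]. unfold Hm. rewrite H1, Nat.eqb_refl.
  apply Nat.eqb_neq in H2. rewrite H2. reflexivity.
Qed.

Lemma Hp_chain p : forall b, chain (Qr ends) (b :: p) -> (forall x, In x p -> (x < 2*B)%nat) ->
  1 <= Hp (length p) b (last (b :: p) 0%nat).
Proof.
  induction p as [|x p IH]; intros b Hc Hlt.
  - simpl. rewrite Nat.eqb_refl. simpl. lra.
  - simpl length. simpl Hp. destruct Hc as [Q1 Hc].
    assert (Hx : (x < 2*B)%nat) by (apply Hlt; left; auto).
    assert (IH' := IH x Hc (fun y Hy => Hlt y (or_intror Hy))).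
    eapply Rle_trans; [|apply (Rsum_ge_term _ _ x Hx)].
    + cbv beta. rewrite Hm_Q by auto. assert (E: last (x :: p) 0%nat = match p with [] => x | _ :: _ => last p 0%nat end) by (destruct p; reflexivity).
      rewrite <- E. lra.
    + intros. apply Rmult_le_pos; [apply Hm_nonneg|apply Hp_nonneg].
Qed.

Lemma Hp_colsum m e : (e < 2*B)%nat -> Rsum (2*B) (fun b => Hp m b e) = (INR d - 1) ^ m.
Proof.
  intro He. induction m; cbn [Hp pow].
  - rewrite Rsum_b2r_eq; auto.
  - rewrite Rsum_swap. rewrite <- IHm. rewrite <- Rsum_mult_l. apply Rsum_ext. intros j Hj.
    rewrite Rsum_mult_r. rewrite (Hm_colsum V B ends d SG REG j Hj). ring.
Qed.

Definition G (lC : list nat) (e : nat) : R := Rsum (2*B) (fun c => Hm ends e c * b2r (inb lC (und c))).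

Lemma G_sum lC : NoDup lC -> (forall x, In x lC -> (x < B)%nat) ->
  Rsum (2*B) (fun e => G lC e) = (INR d - 1) * (2 * INR (length lC)).
Proof.
  intros Hnd Hlt. unfold G. rewrite Rsum_swap.
  rewrite (Rsum_ext _ _ (fun c => (INR d - 1) * b2r (inb lC (und c)))).
  - rewrite Rsum_mult_l. f_equal. rewrite Rsum_2B.
    rewrite (Rsum_ext _ _ (fun j => 2 * b2r (inb lC j))).
    + rewrite Rsum_mult_l, Rsum_inb; auto.
    + intros j _. rewrite und_e, und_o. ring.
  - intros c Hc. rewrite Rsum_mult_r, (Hm_colsum V B ends d SG REG c Hc). reflexivity.
Qed.

Lemma G_ge2 lC e z z' : (z < 2*B)%nat -> (z' < 2*B)%nat -> z <> z' -> Qr ends e z -> Qr ends e z' ->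
  In (und z) lC -> In (und z') lC -> 2 <= G lC e.
Proof.
  intros Hz Hz' Hne Q1 Q2 I1 I2. unfold G.
  eapply Rle_trans; [|apply (Rsum_ge_two _ _ z z'); auto].
  - cbv beta. rewrite !Hm_Q by auto. unfold inb.
    destruct (in_dec Nat.eq_dec (und z) lC); [|contradiction].
    destruct (in_dec Nat.eq_dec (und z') lC); [|contradiction]. simpl. lra.
  - intros. apply Rmult_le_pos; [apply Hm_nonneg|apply b2r_nonneg].
Qed.

End Count.

Open Scope R_scope.

Lemma Csub_Csum n F G : Csub (Csum n F) (Csum n G) = Csum n (fun i => Csub (F i) (G i)).
Proof.
  apply Cpx_eq; unfold Csub.
  - cbn [fst]. rewrite !Csum_fst. rewrite <- Rsum_minus. reflexivity.
  - cbn [snd]. rewrite !Csum_snd. rewrite <- Rsum_minus. reflexivity.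
Qed.

Lemma Csub_mul_l a x y : Csub (Cmul a x) (Cmul a y) = Cmul a (Csub x y).
Proof. apply Cpx_eq; unfold Csub, Cmul; simpl; ring. Qed.
Lemma Csub_RtoC a b w : Csub (Cmul (RtoC a) w) (Cmul (RtoC b) w) = Cmul (RtoC (a - b)) w.
Proof. apply Cpx_eq; unfold Csub, Cmul, RtoC; simpl; ring. Qed.

Lemma geom k q : Rsum k (fun m => q ^ m) * (q - 1) = q ^ k - 1.
Proof. induction k; simpl; [ring|]. rewrite Rmult_plus_distr_r, IHk. ring. Qed.

Lemma final_alg (kappa q nC S : R) (k t : nat) :
  2 <= q -> 0 <= nC -> S * (q - 1) = q ^ k - 1 -> (t = k + 2)%nat ->
  kappa ^ 2 * (S * (q * (2 * nC))) <= 2 * kappa ^ 2 / ((q + 1 - 2) * q) * q ^ t * nC.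
Proof.
  intros Hq HnC HS Ht. subst t.
  replace (q + 1 - 2) with (q - 1) by ring.
  rewrite pow_add.
  assert (Hq1 : 0 < q - 1) by lra.
  assert (E : 2 * kappa ^ 2 / ((q - 1) * q) * (q ^ k * q ^ 2) * nC =
              kappa ^ 2 * (S * (q * (2 * nC))) + 2 * kappa^2 * nC * q / (q - 1)).
  { assert (q ^ k = S * (q - 1) + 1) by lra. rewrite H. field. lra. }
  rewrite E. assert (0 <= 2 * kappa ^ 2 * nC * q / (q - 1)).
  { unfold Rdiv. apply Rmult_le_pos; [|apply Rlt_le, Rinv_0_lt_compat; lra].
    apply Rmult_le_pos; [|lra]. apply Rmult_le_pos; [|lra]. apply Rmult_le_pos; [lra|]. apply pow2_ge_0. }
  lra.
Qed.

Theorem proposition3 (V B d : nat) (ends : nat -> nat * nat) (L : nat -> R)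
  (sigma : nat -> nat -> nat -> Cpx) (T : nat) (kappa : R) (f : nat -> Cpx)
  (nC : nat) :
  simple_graph V B ends -> regular V B ends d -> (3 <= d)%nat ->
  (forall j, (j < B)%nat -> 0 < L j) ->
  vertex_unitary V B ends sigma -> no_backscatter V B ends sigma ->
  (1 <= T)%nat -> 0 < kappa ->
  (forall b, (b < 2 * B)%nat -> Cabs (f b) <= kappa) ->
  card_bonds B (on_short_cycle B ends (2 * T)) nC ->
  forall (t : nat) (Mt : nat -> nat -> R),
    (1 <= t <= T)%nat ->
    is_Mtilde B L ends sigma t Mt ->
    Cabs (Csub (Cinner (2 * B) f (Cmatvec (2 * B) (fun b c => RtoC (Mt b c)) f))
               (Cinner (2 * B) f (Cmatvec (2 * B) (Cmatpow (2 * B) (Mmat ends sigma) t) f)))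
    <= 2 * kappa ^ 2 / ((INR d - 2) * (INR d - 1)) * (INR d - 1) ^ t * INR nC.
Proof.
  intros SG REG Hd HL VU NB HT Hk Hf HC t Mt Ht HMt.
  destruct HC as [lC [Hnd [Hiff Hlen]]].
  pose (Mr := fun i j => Cabs2 (Smat ends sigma i j)).
  pose (Mp := Rpow (2*B) Mr t).
  pose (W := fun b => Rsum (t-2) (fun m => Rsum (2*B) (fun e => Hp B ends m b e * G B ends lC e))).
  assert (F1 : forall b c, (b < 2*B)%nat -> (c < 2*B)%nat -> 0 <= Mt b c).
  { intros b c Hb Hc. apply (ta_nonneg _ _ (HMt b c Hb Hc)). intros; apply Cabs2_nonneg. }
  assert (F2 : forall b, (b < 2*B)%nat -> Rsum (2*B) (fun c => Mt b c) = 1).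
  { intros b Hb.
    apply (ta_const (fun k => Rsum (2*B) (fun c => Cabs2 (Cmatpow (2*B) (Umat L ends sigma k) t b c)))).
    - apply ta_sum. intros c Hc. apply HMt; auto.
    - intro k. apply (Upow_row V B ends sigma L SG VU k t b Hb). }
  assert (F3 : forall b, (b < 2*B)%nat -> Rsum (2*B) (fun c => Mp b c) = 1).
  { intros b Hb. apply Rpow_rowsum; auto. intros j Hj. apply (S_rowsum V B ends sigma SG VU j Hj). }
  assert (F4 : forall b c, 0 <= Mp b c).
  { intros. apply Rpow_nonneg. intros; apply Cabs2_nonneg. }
  assert (Wnn : forall b, 0 <= W b).
  { intro b. apply Rsum_nonneg. intros. apply Rsum_nonneg. intros. apply Rmult_le_pos.
    - apply Hp_nonneg.
    - apply Rsum_nonneg. intros. apply Rmult_le_pos; [apply Hm_nonneg|apply b2r_nonneg]. }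
  assert (RB : forall b, (b < 2*B)%nat -> Rsum (2*B) (fun c => Rabs (Mt b c - Mp b c)) <= W b).
  { intros b Hb.
    destruct (classic (exists c l l', (c < 2*B)%nat /\ rwalk B ends sigma b l /\ rwalk B ends sigma b l' /\
        length l = t /\ length l' = t /\ endp b l = c /\ endp b l' = c /\ l <> l')) as
      [[c [l [l' [Hc [Hl [Hl' [Hlen1 [Hlen2 [He1 [He2 Hne]]]]]]]]]]|Hno].
    - apply Rle_trans with 2.
      + apply Rle_trans with (Rsum (2*B) (fun c => Mt b c + Mp b c)).
        * apply Rsum_le. intros c0 Hc0. assert (0 <= Mt b c0) by auto. assert (0 <= Mp b c0) by auto.
          unfold Rabs; destruct Rcase_abs; lra.
        * rewrite Rsum_plus, F2, F3 by auto. lra.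
      + destruct (bad_struct V B ends sigma SG NB T b t l l') as
          [p [z [z' [C1 [C2 [C3 [C4 [C5 [C6 [C7 [C8 [C9 [C10 C11]]]]]]]]]]]]]; auto; try lia.
        set (e := last (b :: p) 0%nat) in *.
        assert (H1 := Hp_chain B ends p b C1 C2). fold e in H1.
        assert (H2 : 2 <= G B ends lC e).
        { apply (G_ge2 B ends lC e z z'); auto; apply Hiff; split; auto; apply und_lt; auto. }
        unfold W. eapply Rle_trans; [|apply (Rsum_ge_term _ _ (length p)); [lia|]].
        * eapply Rle_trans; [|apply (Rsum_ge_term _ _ e); [auto|]].
          -- cbv beta. assert (0 <= Hp B ends (length p) b e) by apply Hp_nonneg. nra.
          -- intros. apply Rmult_le_pos; [apply Hp_nonneg|].
             apply Rsum_nonneg. intros. apply Rmult_le_pos; [apply Hm_nonneg|apply b2r_nonneg].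
        * intros. apply Rsum_nonneg. intros. apply Rmult_le_pos; [apply Hp_nonneg|].
          apply Rsum_nonneg. intros. apply Rmult_le_pos; [apply Hm_nonneg|apply b2r_nonneg].
    - rewrite (Rsum_ext _ _ (fun _ => 0)); [rewrite Rsum_const0; auto|].
      intros c Hc.
      assert (E : Mt b c = Mp b c).
      { apply (ta_const _ _ _ (HMt b c Hb Hc)). intro k.
        assert (G1 := good_entry B ends sigma L b c t Hb Hc). cbv beta in G1. unfold Mp, Mr. apply G1.
        intros l l' Hl Hl' Hlen1 Hlen2 He1 He2. apply NNPP. intro Hne. apply Hno.
        exists c, l, l'. repeat split; auto. }
      rewrite E. replace (Mp b c - Mp b c) with 0 by ring. apply Rabs_R0. }
  assert (LHS : Cabs (Csub (Cinner (2 * B) f (Cmatvec (2 * B) (fun b c => RtoC (Mt b c)) f))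
               (Cinner (2 * B) f (Cmatvec (2 * B) (Cmatpow (2 * B) (Mmat ends sigma) t) f)))
      <= kappa ^ 2 * Rsum (2*B) (fun b => Rsum (2*B) (fun c => Rabs (Mt b c - Mp b c)))).
  { unfold Cinner. rewrite Csub_Csum. eapply Rle_trans; [apply Cabs_Csum|].
    rewrite <- Rsum_mult_l. apply Rsum_le. intros b Hb.
    rewrite Csub_mul_l, Cabs_mul, Cabs_conj.
    assert (X : Cabs (Csub (Cmatvec (2 * B) (fun b0 c : nat => RtoC (Mt b0 c)) f b)
         (Cmatvec (2 * B) (Cmatpow (2 * B) (Mmat ends sigma) t) f b)) <=
         kappa * Rsum (2*B) (fun c => Rabs (Mt b c - Mp b c))).
    { unfold Cmatvec. rewrite Csub_Csum. eapply Rle_trans; [apply Cabs_Csum|].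
      rewrite <- Rsum_mult_l. apply Rsum_le. intros c Hc.
      change (Mmat ends sigma) with (fun i j => RtoC (Mr i j)).
      rewrite Cmatpow_real. rewrite Csub_RtoC, Cabs_mul, Cabs_RtoC.
      assert (Cabs (f c) <= kappa) by auto. assert (0 <= Rabs (Mt b c - Mp b c)) by apply Rabs_pos.
      fold Mp. nra. }
    assert (Cabs (f b) <= kappa) by auto. assert (0 <= Cabs (f b)) by apply Cabs_nonneg.
    assert (0 <= Cabs (Csub (Cmatvec (2 * B) (fun b0 c : nat => RtoC (Mt b0 c)) f b)
         (Cmatvec (2 * B) (Cmatpow (2 * B) (Mmat ends sigma) t) f b))) by apply Cabs_nonneg.
    nra. }
  assert (SW : Rsum (2*B) (fun b => W b) =
     Rsum (t-2) (fun m => (INR d - 1) ^ m) * ((INR d - 1) * (2 * INR (length lC)))).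
  { unfold W. rewrite Rsum_swap. rewrite <- Rsum_mult_r. apply Rsum_ext. intros m _.
    rewrite Rsum_swap.
    rewrite (Rsum_ext _ _ (fun e => (INR d - 1) ^ m * G B ends lC e)).
    - rewrite Rsum_mult_l. rewrite (G_sum V B ends d SG REG); auto.
      intros x Hx. apply Hiff in Hx. tauto.
    - intros e He. rewrite Rsum_mult_r. rewrite (Hp_colsum V B ends d SG REG m e He). reflexivity. }
  assert (Hsum : Rsum (2*B) (fun b => Rsum (2*B) (fun c => Rabs (Mt b c - Mp b c))) <= Rsum (2*B) (fun b => W b)).
  { apply Rsum_le. auto. }
  assert (Hq : 2 <= INR d - 1).
  { apply le_INR in Hd. simpl in Hd. lra. }
  rewrite Hlen in SW.
  eapply Rle_trans; [exact LHS|].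
  eapply Rle_trans; [apply Rmult_le_compat_l; [apply pow2_ge_0|exact Hsum]|].
  rewrite SW.
  replace (INR d - 2) with ((INR d - 1) + 1 - 2) by ring.
  destruct (Nat.eq_dec t 1) as [E1|E1].
  - subst t. simpl Rsum. rewrite Rmult_0_l, Rmult_0_r.
    assert (0 <= INR nC) by apply pos_INR.
    assert (0 < (INR d - 1 + 1 - 2) * (INR d - 1)) by nra.
    apply Rmult_le_pos; [|auto]. apply Rmult_le_pos; [|apply pow_le; lra].
    unfold Rdiv. apply Rmult_le_pos; [apply Rmult_le_pos; [lra|apply pow2_ge_0]|].
    apply Rlt_le, Rinv_0_lt_compat; auto.
  - apply (final_alg kappa (INR d - 1) (INR nC) _ (t-2)); auto.
    + apply pos_INR.
    + apply geom.
    + lia.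
Qed.
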